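(* Let $\Phi:\ell^\infty(\mathbb Z)\to\ell^\infty(\mathbb Z)$ be a bounded linear map commuting with the backward shift $B$, $(Bv)_n=v_{n+1}$. Let $\phi_0(v)=\Phi(v)_0$ be its $0$-th coordinate functional (so that $\Phi(v)_n=\phi_0(B^nv)$ for all $n$), and decompose $\phi_0=\phi^{ac}+\phi^{s}$, where $\phi^{ac}$ is weak*-continuous (i.e. $\phi^{ac}(v)=\sum_n a_nv_n$ for some $a\in\ell^1(\mathbb Z)$) and $\phi^{s}$ is singular (i.e. $\phi^s$ vanishes on $c_0(\mathbb Z)$). Define $\Phi^{ac}(v)=(\phi^{ac}(B^nv))_{n\in\mathbb Z}$ and $\Phi^{s}(v)=(\phi^{s}(B^nv))_{n\in\mathbb Z}$. Then $\Phi^{ac}$ and $\Phi^s$ both commute with $B$, $\Phi^{ac}$ is weak*-continuous, $\Phi^{ac}(c_0(\mathbb Z))\subseteq c_0(\mathbb Z)$, $\Phi^{s}(c_0(\mathbb Z))=0$, and $\Phi=\Phi^{ac}+\Phi^{s}$. Moreover this is the unique decomposition of $\Phi$ as a sum of a weak*-continuous map and a singular map (a map annihilating $c_0(\mathbb Z)$).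
   Context: $c_0(\mathbb Z)\subseteq\ell^\infty(\mathbb Z)$ denotes the sequences tending to $0$ at $\pm\infty$. A linear map on $\ell^\infty(\mathbb Z)$ is called $\mathbb Z$-equivariant if it commutes with the backward shift $B$. *)

(* Defs.v *)
From HB Require Import structures.
From mathcomp Require Import all_boot all_order all_algebra.
From mathcomp Require Import all_classical all_reals topology normedtype sequences.
Set Implicit Arguments. Unset Strict Implicit. Unset Printing Implicit Defensive.
Import Order.TTheory GRing.Theory Num.Theory.
Import numFieldNormedType.Exports.
Local Open Scope ring_scope.

Section Defs.
Variable R : realType.
Implicit Types (v a : int -> R) (T : (int -> R) -> (int -> R)).

Definition linf v : Prop := exists M : R, forall n, `|v n| <= M.

Definition c0 v : Prop :=
  forall e : R, 0 < e -> exists N : nat, forall n : int, (N < `|n|)%N -> `|v n| < e.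

(* a ∈ ℓ^1(Z); int is enumerated as Posz k (= k) and Negz k (= -(k+1)), k : nat *)
Definition l1 a : Prop :=
  cvgn (series (fun k : nat => `|a (Posz k)| + `|a (Negz k)|)).

Definition pairing a v : R :=
  limn (series (fun k : nat => a (Posz k) * v (Posz k) + a (Negz k) * v (Negz k))).

Definition bshift v : int -> R := fun n => v (n + 1).
Definition bshiftn (m : int) v : int -> R := fun n => v (n + m).

Definition linear_on T : Prop :=
  forall u v (c : R), linf u -> linf v ->
    forall n, T (fun k => c * u k + v k) n = c * T u n + T v n.

Definition bounded_op T : Prop :=
  exists C : R, forall v (M : R), (forall n, `|v n| <= M) -> forall n, `|T v n| <= C * M.

Definition Z_equivariant T : Prop :=
  forall v, linf v -> forall n, T (bshift v) n = bshift (T v) n.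

(* weak*-continuous map ℓ^∞ -> ℓ^∞ (ℓ^∞ = dual of ℓ^1): it maps ℓ^∞ into ℓ^∞ and
   composing it with any weak*-continuous functional <b,.> (b ∈ ℓ^1) gives a
   weak*-continuous functional <c,.> (c ∈ ℓ^1). *)
Definition wstar_continuous T : Prop :=
  (forall v, linf v -> linf (T v)) /\
  forall b, l1 b -> exists c, l1 c /\ forall v, linf v -> pairing b (T v) = pairing c v.

Definition singular_map T : Prop := forall v, c0 v -> forall n, T v n = 0.

End Defs.

(* Main.v *)
Require Import Defs.
From HB Require Import structures.
From mathcomp Require Import all_boot all_order all_algebra.
From mathcomp Require Import all_classical all_reals topology normedtype sequences.
From mathcomp Require Import ring lra zify.
Import Order.TTheory GRing.Theory Num.Theory.
Import numFieldNormedType.Exports.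
Local Open Scope classical_set_scope.
Local Open Scope ring_scope.
Set Implicit Arguments. Unset Strict Implicit. Unset Printing Implicit Defensive.

Definition idx (k : int) : nat := match k with Posz i => i | Negz i => i end.
Definition asr {R : realType} (a : int -> R) :=
  series (fun k : nat => `|a (Posz k)| + `|a (Negz k)|).
Definition ps {R : realType} (a v : int -> R) :=
  series (fun k : nat => a (Posz k) * v (Posz k) + a (Negz k) * v (Negz k)).
Definition nrm1 {R : realType} (a : int -> R) := limn (asr a).

Lemma ps_cvg {R : realType} (a v : int -> R) (M : R) :
  l1 a -> (forall k, `|v k| <= M) -> cvgn (ps a v).
Proof.
move=> la vM; apply: normed_cvg.
have M0 : 0 <= M by apply: le_trans (vM 0).
apply: (@series_le_cvg _ _ (M *: (fun k : nat => `|a (Posz k)| + `|a (Negz k)|))).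
- by move=> n; exact: normr_ge0.
- by move=> n; rewrite /= mulr_ge0 // addr_ge0.
- move=> n; rewrite [X in _ <= X]/GRing.scale /=.
  rewrite (_ : M *: _ = M * (`|a n| + `|a (Negz n)|)) //.
  apply: (le_trans (ler_normD _ _)); rewrite mulrDr.
  by rewrite lerD // normrM mulrC ler_wpM2r.
- exact: is_cvg_seriesZ.
Qed.

Lemma asr_nd {R : realType} (a : int -> R) : nondecreasing_seq (asr a).
Proof.
rewrite /asr /series /=; apply: nondecreasing_series => n _ _.
by rewrite addr_ge0.
Qed.

Lemma asr_le {R : realType} (a : int -> R) j : l1 a -> asr a j <= nrm1 a.
Proof. by move=> la; apply: nondecreasing_cvgn_le => //; exact: asr_nd. Qed.

Lemma ps_tail {R : realType} (a v : int -> R) (M : R) K :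
  l1 a -> (forall k, `|v k| <= M) ->
  `|pairing a v - ps a v K| <= M * (nrm1 a - asr a K).
Proof.
move=> la vM; have M0 : 0 <= M by apply: le_trans (vM 0).
have cP := ps_cvg la vM.
apply: (cvgr_to_le (F := eventually) (f := fun j : nat => `|ps a v j - ps a v K|)).
  apply: cvg_norm; apply: cvgB; first exact: cP.
  exact: cvg_cst.
near=> j.
have Kj : (K <= j)%N by near: j; exact: nbhs_infty_ge.
rewrite /ps sub_series_geq //.
apply: (le_trans (ler_norm_sum _ _ _)).
apply: (@le_trans _ _ (M * (asr a j - asr a K))); last first.
  by rewrite ler_wpM2l // lerB // asr_le.
rewrite /asr sub_series_geq // mulr_sumr; apply: ler_sum => i _.
apply: (le_trans (ler_normD _ _)); rewrite mulrDr.
by rewrite lerD // normrM mulrC ler_wpM2r.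
Unshelve. all: by end_near. Qed.

Lemma pairing_bound {R : realType} (a v : int -> R) (M : R) :
  l1 a -> (forall k, `|v k| <= M) -> `|pairing a v| <= M * nrm1 a.
Proof.
move=> la vM; have := ps_tail 0 la vM.
by rewrite /ps /asr /series /= !big_geq // !subr0.
Qed.

Lemma ps_to {R : realType} (a v : int -> R) (M : R) :
  l1 a -> (forall k, `|v k| <= M) -> ps a v @ \oo --> pairing a v.
Proof. by move=> la vM; exact: ps_cvg la vM. Qed.

Lemma pairing_lin {R : realType} (a u v : int -> R) (c Mu Mv : R) :
  l1 a -> (forall k, `|u k| <= Mu) -> (forall k, `|v k| <= Mv) ->
  pairing a (fun k => c * u k + v k) = c * pairing a u + pairing a v.
Proof.
move=> la uM vM.
have -> : pairing a (fun k => c * u k + v k) = limn (fun j => c * ps a u j + ps a v j).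
  congr (limn _); apply/funext => j; rewrite /ps /series /= mulr_sumr -big_split /=.
  by apply: eq_bigr => i _; ring.
apply: cvg_lim => //; apply: cvgD; last exact: ps_to vM.
by apply: cvgM; [exact: cvg_cst | exact: ps_to uM].
Qed.

Lemma ps_fin_cvg0 {R : realType} (a : int -> R) (D : nat -> int -> R) K :
  (forall k, (fun j => D j k) @ \oo --> 0) -> (fun j => ps a (D j) K) @ \oo --> 0.
Proof.
move=> HD; elim: K => [|K IH].
  have -> : (fun j => ps a (D j) 0) = fun _ => 0.
    by apply/funext => j; rewrite /ps /series /= big_geq.
  exact: cvg_cst.
have -> : (fun j => ps a (D j) K.+1) =
   (fun j => ps a (D j) K + (a (Posz K) * D j (Posz K) + a (Negz K) * D j (Negz K))).
  by apply/funext => j; rewrite /ps seriesSr.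
rewrite -[X in _ --> X](addr0 0); apply: cvgD => //.
rewrite -[X in _ --> X](addr0 0); apply: cvgD.
  rewrite -(mulr0 (a (Posz K))); apply: cvgM => //; exact: cvg_cst.
rewrite -(mulr0 (a (Negz K))); apply: cvgM => //; exact: cvg_cst.
Qed.

Lemma pairing_dct {R : realType} (a : int -> R) (u : nat -> int -> R) (w : int -> R) (M : R) :
  l1 a -> (forall j k, `|u j k| <= M) -> (forall k, `|w k| <= M) ->
  (forall k, (fun j => u j k) @ \oo --> w k) ->
  (fun j => pairing a (u j)) @ \oo --> pairing a w.
Proof.
move=> la uM wM uw.
have M0 : 0 <= M by apply: le_trans (wM 0).
pose D j k := -1 * w k + u j k.
have DM : forall j k, `|D j k| <= M + M.
  by move=> j k; rewrite /D mulN1r (le_trans (ler_normD _ _)) // normrN lerD.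
have eD : forall j, pairing a (u j) - pairing a w = pairing a (D j).
  by move=> j; rewrite /D (pairing_lin _ la wM (uM j)) mulN1r addrC.
have D0 : forall k, (fun j => D j k) @ \oo --> 0.
  move=> k; rewrite -(addNr (w k)) -mulN1r; apply: cvgD => //; exact: cvg_cst.
apply/cvgrPdist_lt => e e0.
have tl : (fun K => (M + M) * (nrm1 a - asr a K)) @ \oo --> 0.
  rewrite -(mulr0 (M + M)); apply: cvgM; first exact: cvg_cst.
  rewrite -(subrr (nrm1 a)); apply: cvgB; first exact: cvg_cst.
  exact: la.
have [K _ HK] := cvgr0_norm_lt _ tl (e / 2) (divr_gt0 e0 (ltr0n _ 2)).
have Hn := cvgr0_norm_lt _ (ps_fin_cvg0 a K D0) (e / 2) (divr_gt0 e0 (ltr0n _ 2)).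
near=> j.
have Hj : `|ps a (D j) K| < e / 2 by near: j; exact: Hn.
rewrite distrC eD.
have HKK := HK K (leqnn K); rewrite /= in HKK.
have := ps_tail K la (DM j).
move=> T.
rewrite -[pairing a (D j)](subrK (ps a (D j) K)).
apply: (le_lt_trans (ler_normD _ _)).
rewrite [e](splitr e); apply: ltr_leD => //.
  by apply: le_lt_trans T (le_lt_trans (ler_norm _) HKK).
exact: ltW.
Unshelve. all: by end_near. Qed.

Definition tr {R : realType} (j : nat) (v : int -> R) : int -> R :=
  fun k => if (idx k < j)%N then v k else 0.
Definition dl {R : realType} (m : int) : int -> R := fun k => if k == m then 1 else 0.

Lemma tr_bound {R : realType} (v : int -> R) (M : R) j :
  (forall k, `|v k| <= M) -> forall k, `|tr j v k| <= M.
Proof.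
move=> vM k; rewrite /tr; case: ifP => _ //.
by rewrite normr0; apply: le_trans (vM 0).
Qed.

Lemma tr_pt {R : realType} (v : int -> R) k : (fun j => tr j v k) @ \oo --> v k.
Proof.
apply: cvg_near_cst; near=> j.
have : ((idx k).+1 <= j)%N by near: j; exact: nbhs_infty_ge.
by rewrite /tr => ->.
Unshelve. all: by end_near. Qed.

Lemma idx_abs (k : int) : (absz k <= (idx k).+1)%N.
Proof. by case: k => i //=; rewrite leqnSn. Qed.

Lemma tr_c0 {R : realType} (v : int -> R) j : c0 (tr j v).
Proof.
move=> e e0; exists j => k Hk; rewrite /tr.
have := idx_abs k => H.
have -> : (idx k < j)%N = false by apply/negbTE; rewrite -leqNgt; lia.
by rewrite normr0.
Qed.

Lemma bshiftn_bound {R : realType} (v : int -> R) (M : R) n :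
  (forall k, `|v k| <= M) -> forall k, `|bshiftn n v k| <= M.
Proof. by move=> vM k; exact: vM. Qed.

Lemma TC {R : realType} (a v : int -> R) (M : R) n :
  l1 a -> (forall k, `|v k| <= M) ->
  (fun j => pairing a (bshiftn n (tr j v))) @ \oo --> pairing a (bshiftn n v).
Proof.
move=> la vM; apply: (@pairing_dct _ a (fun j => bshiftn n (tr j v)) _ M la).
- by move=> j k; apply: bshiftn_bound; exact: tr_bound.
- exact: bshiftn_bound.
- by move=> k; exact: tr_pt.
Qed.

Lemma dl_term {R : realType} (n : int) (w : int -> R) j :
  dl n (Posz j) * w (Posz j) + dl n (Negz j) * w (Negz j) =
  if idx n == j then w n else 0.
Proof.
rewrite /dl; case: n => p /=; have [->|ne] := eqVneq p j.
- by rewrite eqxx mul1r mul0r addr0.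
- have -> : (Posz j == Posz p) = false by apply/eqP; case => /esym/eqP; rewrite (negbTE ne).
  by rewrite mul0r mul0r addr0.
- by rewrite eqxx mul1r mul0r add0r.
- have -> : (Negz j == Negz p) = false by apply/eqP; case => /esym/eqP; rewrite (negbTE ne).
  by rewrite mul0r mul0r addr0.
Qed.

Lemma ps_dl {R : realType} (n : int) (w : int -> R) j :
  ps (dl n) w j = if (idx n < j)%N then w n else 0.
Proof.
elim: j => [|j IH]; first by rewrite /ps /series /= big_geq.
rewrite /ps seriesSr -/(ps _ _ _) IH dl_term.
have [->|ne] := eqVneq (idx n) j; first by rewrite ltnn ltnSn add0r.
by rewrite addr0 ltn_neqAle ne.
Qed.

Lemma ps_dl_to {R : realType} (n : int) (w : int -> R) : ps (dl n) w @ \oo --> w n.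
Proof.
apply: cvg_near_cst; near=> j.
have : ((idx n).+1 <= j)%N by near: j; exact: nbhs_infty_ge.
by rewrite ps_dl => ->.
Unshelve. all: by end_near. Qed.

Lemma pairing_dl {R : realType} (n : int) (w : int -> R) : pairing (dl n) w = w n.
Proof. by apply: cvg_lim => //; exact: ps_dl_to. Qed.

Lemma l1_dl {R : realType} (n : int) : l1 (@dl R n).
Proof.
rewrite /l1 -/(asr _).
have -> : asr (@dl R n) = ps (dl n) (fun _ => 1).
  apply/funext => j; rewrite /asr /ps /series /=; apply: eq_bigr => i _.
  by rewrite /dl; case: ifP; case: ifP; rewrite ?normr1 ?normr0 ?mulr1.
by apply: cvgP; exact: (@ps_dl_to R n (fun _ => 1)).
Qed.

Lemma repr_lemma {R : realType} (L : (int -> R) -> R) (C : R) :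
  (forall (u v : int -> R) (c Mu Mv : R), (forall k, `|u k| <= Mu) -> (forall k, `|v k| <= Mv) ->
     L (fun k => c * u k + v k) = c * L u + L v) ->
  (forall (v : int -> R) (M : R), (forall k, `|v k| <= M) -> `|L v| <= C * M) ->
  (forall (v : int -> R) (M : R), (forall k, `|v k| <= M) -> (fun j => L (tr j v)) @ \oo --> L v) ->
  exists c, l1 c /\ forall (v : int -> R) (M : R), (forall k, `|v k| <= M) -> L v = pairing c v.
Proof.
move=> lin bnd trc.
pose c := fun m => L (dl m).
have z0 : forall k : int, `|(fun _ => 0 : R) k| <= 0 by move=> k; rewrite normr0.
have L0 : L (fun _ => 0) = 0.
  have := lin _ _ 1 _ _ z0 z0.
  have -> : (fun k : int => 1 * (fun _ => 0 : R) k + (fun _ => 0 : R) k) = (fun _ => 0).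
    by apply/funext => k; rewrite mulr0 addr0.
  by move=> /(congr1 (fun y => y - L (fun=> 0))); rewrite mul1r addrK subrr => /esym.
have dlM : forall m k, `|@dl R m k| <= 1.
  by move=> m k; rewrite /dl; case: ifP; rewrite ?normr1 ?normr0.
have step : forall (v : int -> R) (M : R), (forall k, `|v k| <= M) -> forall j, L (tr j v) = ps c v j.
  move=> v M vM; elim=> [|j IH].
    have -> : tr 0 v = fun _ => 0 by apply/funext => k; rewrite /tr ltn0.
    by rewrite L0 /ps /series /= big_geq.
  have -> : tr j.+1 v = fun k => v (Posz j) * dl (Posz j) k +
              (fun k => v (Negz j) * dl (Negz j) k + tr j v k) k.
    apply/funext => k; rewrite /tr /dl; case: k => i /=.
    - have [->|ne] := eqVneq i j; first by rewrite ltnSn ltnn eqxx mulr1 mulr0 !addr0.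
      by rewrite eqz_nat (negbTE ne) mulr0 mulr0 !add0r ltnS ltn_neqAle ne.
    - have [->|ne] := eqVneq i j; first by rewrite ltnSn ltnn eqxx mulr1 mulr0 add0r addr0.
      have -> : (Negz i == Negz j) = false by apply/eqP => -[E]; move: ne; rewrite E eqxx.
      by rewrite mulr0 mulr0 !add0r ltnS ltn_neqAle ne.
  have b2 : forall k, `|v (Negz j) * dl (Negz j) k + tr j v k| <= `|v (Negz j)| + M.
    move=> k; apply: (le_trans (ler_normD _ _)); apply: lerD; last exact: tr_bound.
    by rewrite normrM -[X in _ <= X]mulr1 ler_wpM2l.
  rewrite (lin _ _ _ _ _ (dlM (Posz j)) b2).
  rewrite (lin _ _ _ _ _ (dlM (Negz j)) (tr_bound j vM)) IH.
  by rewrite /ps seriesSr /c; ring.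
have conv : forall (v : int -> R) (M : R), (forall k, `|v k| <= M) -> ps c v @ \oo --> L v.
  move=> v M vM; have := trc v M vM.
  by have -> : (fun j => L (tr j v)) = ps c v by apply/funext => j; exact: step vM j.
have lc : l1 c.
  rewrite /l1 -/(asr c); apply: nondecreasing_is_cvgn; first exact: asr_nd.
  pose s := fun k => Num.sg (c k).
  have sM : forall k, `|s k| <= 1.
    by move=> k; rewrite /s normr_sg; case: (c k != 0).
  exists C => _ [j _ <-].
  have -> : asr c j = ps c s j.
    rewrite /asr /ps /series /=; apply: eq_bigr => i _.
    by rewrite /s !normrEsg [c (Posz i) * _]mulrC [c (Negz i) * _]mulrC.
  rewrite -(step _ _ sM) -[C]mulr1; apply: le_trans (ler_norm _) _.
  exact: bnd (tr_bound j sM).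
exists c; split => // v M vM; apply/esym; rewrite /pairing -/(ps c v).
by apply: cvg_lim => //; exact: conv vM.
Qed.

Lemma c0_bound {R : realType} (v : int -> R) : c0 v -> exists M : R, forall k, `|v k| <= M.
Proof.
move=> cv; have [N HN] := cv 1 ltr01.
pose S := \sum_(i < N.+1) (`|v (Posz i)| + `|v (Negz i)|).
have S0 : 0 <= S by apply: sumr_ge0 => i _; rewrite addr_ge0.
exists (1 + S) => k.
have [Nk|kN] := ltnP N (absz k).
  by apply: le_trans (ltW (HN k Nk)) _; rewrite lerDl.
have ik : (idx k < N.+1)%N by case: k kN => i //= H; lia.
apply: le_trans _ (ler_wpDl ler01 (le_refl _)).
rewrite /S (bigD1 (Ordinal ik)) //=.
apply: le_trans (_ : _ <= `|v (Posz (idx k))| + `|v (Negz (idx k))|) _.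
  by case: k {kN ik} => i /=; rewrite ?lerDl ?lerDr.
by rewrite lerDl; apply: sumr_ge0 => i _; rewrite addr_ge0.
Qed.

Lemma bshiftn_c0 {R : realType} (v : int -> R) n : c0 v -> c0 (bshiftn n v).
Proof.
move=> cv e e0; have [N HN] := cv e e0; exists (N + absz n)%N => k Hk.
by apply: HN; lia.
Qed.

Lemma linf_bshiftn {R : realType} (v : int -> R) n : linf v -> linf (bshiftn n v).
Proof. by case=> M vM; exists M => k; exact: vM. Qed.

Lemma Phi_shift {R : realType} (Phi : (int -> R) -> (int -> R)) :
  Z_equivariant Phi -> forall (m : nat) w, linf w -> forall k, Phi (bshiftn m w) k = Phi w (k + m%:Z).
Proof.
move=> eqv; elim=> [|m IH] w lw k.
  have -> : bshiftn 0 w = w by apply/funext => i; rewrite /bshiftn addr0.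
  by rewrite addr0.
have -> : bshiftn m.+1 w = bshift (bshiftn m w).
  by apply/funext => i; rewrite /bshift /bshiftn; congr w; lia.
rewrite eqv; last exact: linf_bshiftn.
by rewrite /bshift IH //; congr (Phi w _); lia.
Qed.

Lemma Phi_at {R : realType} (Phi : (int -> R) -> (int -> R)) v :
  Z_equivariant Phi -> linf v -> forall n, Phi v n = Phi (bshiftn n v) 0.
Proof.
move=> eqv lv [m|m].
  by rewrite (Phi_shift eqv) // add0r.
set w := bshiftn (Negz m) v.
have -> : v = bshiftn m.+1 w.
  by apply/funext => i; rewrite /w /bshiftn NegzE; congr v; lia.
rewrite (Phi_shift eqv); last exact: linf_bshiftn.
by congr (Phi _ _); rewrite NegzE; lia.
Qed.

Lemma c0_pt {R : realType} (v : int -> R) k : c0 v ->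
  (fun m : nat => v (k + m%:Z)) @ \oo --> 0 /\ (fun m : nat => v (k - m%:Z)) @ \oo --> 0.
Proof.
move=> cv; split; apply/cvgrPdist_lt => e e0; have [N HN] := cv e e0; near=> m;
  rewrite sub0r normrN; apply: HN;
  (have : ((N + absz k).+1 <= m)%N by near: m; exact: nbhs_infty_ge); lia.
Unshelve. all: by end_near. Qed.

Lemma pairing0 {R : realType} (a : int -> R) : l1 a -> pairing a (fun _ => 0) = 0.
Proof.
move=> la; apply/normr0_eq0; apply/eqP; rewrite eq_le normr_ge0 andbT.
have := @pairing_bound R a (fun _ => 0) 0 la.
by rewrite mul0r; apply => k; rewrite normr0.
Qed.

Theorem proposition2p1 (R : realType) (Phi : (int -> R) -> (int -> R))
  (a : int -> R) (phis : (int -> R) -> R) :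
  linear_on Phi -> bounded_op Phi -> Z_equivariant Phi ->
  l1 a ->
  (forall v, linf v -> Phi v 0 = pairing a v + phis v) ->
  (forall v, c0 v -> phis v = 0) ->
  let Phiac := fun v (n : int) => pairing a (bshiftn n v) in
  let Phis := fun v (n : int) => phis (bshiftn n v) in
  Z_equivariant Phiac /\ Z_equivariant Phis /\
  wstar_continuous Phiac /\
  (forall v, c0 v -> c0 (Phiac v)) /\
  singular_map Phis /\
  (forall v, linf v -> forall n, Phi v n = Phiac v n + Phis v n) /\
  (forall Psi1 Psi2 : (int -> R) -> (int -> R),
        linear_on Psi1 -> linear_on Psi2 ->
        wstar_continuous Psi1 -> singular_map Psi2 ->
        (forall v, linf v -> forall n, Phi v n = Psi1 v n + Psi2 v n) ->
        forall v, linf v -> forall n, Psi1 v n = Phiac v n /\ Psi2 v n = Phis v n).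
Proof.
move=> lin bnd eqv la hphi hs Phiac Phis.
have acB : forall v (M : R), (forall k, `|v k| <= M) -> forall n, `|Phiac v n| <= M * nrm1 a.
  by move=> v M vM n; exact: pairing_bound la (bshiftn_bound n vM).
have P6 : forall v, linf v -> forall n, Phi v n = Phiac v n + Phis v n.
  by move=> v lv n; rewrite (Phi_at eqv lv n) hphi //; exact: linf_bshiftn.
split.
  move=> v _ n; rewrite /Phiac /bshift; congr (pairing a _).
  by apply/funext => k; rewrite /bshiftn; congr v; lia.
split.
  move=> v _ n; rewrite /Phis /bshift; congr (phis _).
  by apply/funext => k; rewrite /bshiftn; congr v; lia.
split.
  split; first by move=> v [M vM]; exists (M * nrm1 a); exact: acB vM.
  move=> b lb.
  have [c [lc Hc]] : exists c, l1 c /\ forall (v : int -> R) (M : R),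
      (forall k, `|v k| <= M) -> pairing b (Phiac v) = pairing c v.
    apply: (@repr_lemma R (fun v => pairing b (Phiac v)) (nrm1 a * nrm1 b)).
  - move=> u v c Mu Mv uM vM.
    have -> : Phiac (fun k => c * u k + v k) = fun n => c * Phiac u n + Phiac v n.
      by apply/funext => n; exact: pairing_lin la (bshiftn_bound n uM) (bshiftn_bound n vM).
    exact: pairing_lin lb (acB _ _ uM) (acB _ _ vM).
  - move=> v M vM; apply: le_trans (pairing_bound lb (acB _ _ vM)) _.
    by rewrite le_eqVlt; apply/orP; left; apply/eqP; ring.
  - move=> v M vM.
    apply: (@pairing_dct _ b (fun j => Phiac (tr j v)) _ (M * nrm1 a) lb).
    + by move=> j; apply: acB; exact: tr_bound.
    + exact: acB.
    + by move=> n; exact: TC la vM.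
  by exists c; split => // v [M vM]; exact: Hc vM.
split.
  move=> v cv; have [M vM] := c0_bound cv.
  have pos : (fun m : nat => Phiac v m%:Z) @ \oo --> 0.
    rewrite -(pairing0 la).
    apply: (@pairing_dct _ a (fun m : nat => bshiftn m%:Z v) _ M la).
    + by move=> j; exact: bshiftn_bound.
    + by move=> k /=; rewrite normr0; apply: le_trans (vM 0).
    + by move=> k; exact: (c0_pt k cv).1.
  have neg : (fun m : nat => Phiac v (- m%:Z)) @ \oo --> 0.
    rewrite -(pairing0 la).
    apply: (@pairing_dct _ a (fun m : nat => bshiftn (- m%:Z) v) _ M la).
    + by move=> j; exact: bshiftn_bound.
    + by move=> k /=; rewrite normr0; apply: le_trans (vM 0).
    + by move=> k; exact: (c0_pt k cv).2.
  move=> e e0.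
  have [N1 _ H1] := cvgr0_norm_lt _ pos e e0.
  have [N2 _ H2] := cvgr0_norm_lt _ neg e e0.
  exists (N1 + N2)%N => -[m|m] Hn.
    by apply: H1 => /=; move: Hn => /=; lia.
  rewrite NegzE; apply: (H2 m.+1) => /=; move: Hn => /=; lia.
split.
  by move=> v cv n; rewrite /Phis; apply: hs; exact: bshiftn_c0.
split; first exact: P6.
move=> Psi1 Psi2 _ _ [_ w1] s2 dec v [M vM] n.
have [c [lc Hc]] := w1 (dl n) (@l1_dl R n).
have e1 : forall u, linf u -> Psi1 u n = pairing c u.
  by move=> u lu; rewrite -Hc // pairing_dl.
have ec0 : forall u, linf u -> c0 u -> Psi1 u n = Phiac u n.
  move=> u lu cu; have := dec u lu n; rewrite s2 // addr0 => <-.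
  by rewrite P6 // /Phis hs ?addr0 //; exact: bshiftn_c0.
have lv : linf v by exists M.
have E : Psi1 v n = Phiac v n.
  rewrite e1 //.
  have lt : forall j, linf (tr j v) by move=> j; exists M; exact: tr_bound.
  have A1 : (fun j => pairing c (tr j v)) @ \oo --> pairing c v.
    exact: (@pairing_dct _ c (fun j => tr j v) _ M lc (fun j => tr_bound j vM) vM (@tr_pt R v)).
  have A2 : (fun j => pairing c (tr j v)) @ \oo --> Phiac v n.
    have -> : (fun j => pairing c (tr j v)) = fun j => pairing a (bshiftn n (tr j v)).
      by apply/funext => j; rewrite -e1 //; apply: ec0 => //; exact: tr_c0.
    exact: TC la vM.
  by rewrite -(cvg_lim _ A1) // -(cvg_lim _ A2).
split => //.
have := dec v lv n; rewrite P6 // E => /addrI ->.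
by [].
Qed.
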